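(* Let $\gamma$ be an admissible path and let $t<s<t+\pi$ be in the domain of $\gamma$. Then the angle between the vector $\gamma'(t)$ and the ray from $\gamma(t)$ through $\gamma(s)$ is at most $\frac{s-t}{2}$.
   Context: An admissible path is a continuously differentiable planar curve $\gamma$ parameterized by arclength (so $\gamma'(t)$ is a unit tangent vector) such that for all $t<s<t+\pi$ in its domain, the angle $\alpha(s,t)$ between the directions $\gamma'(s)$ and $\gamma'(t)$ satisfies $\alpha(s,t)\le s-t$. *)

(* Defs.v *)
From Stdlib Require Import Reals.
From Coquelicot Require Import Coquelicot.
Open Scope R_scope.

Definition vec := (R * R)%type.
Definition vsub (u v : vec) : vec := (fst u - fst v, snd u - snd v).
Definition vdot (u v : vec) : R := fst u * fst v + snd u * snd v.
Definition vnorm (u : vec) : R := sqrt (vdot u u).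

Definition vangle (u v : vec) : R := acos (vdot u v / (vnorm u * vnorm v)).

Definition is_interval (I : R -> Prop) : Prop :=
  forall a b x, I a -> I b -> a <= x <= b -> I x.

Definition C1_arclength (I : R -> Prop) (gamma dgamma : R -> vec) : Prop :=
  is_interval I /\
  (forall x, I x ->
     is_derive (fun y => fst (gamma y)) x (fst (dgamma x)) /\
     is_derive (fun y => snd (gamma y)) x (snd (dgamma x))) /\
  (forall x, I x ->
     filterlim dgamma (within I (locally x)) (locally (dgamma x))) /\
  (forall x, I x -> vnorm (dgamma x) = 1).

Definition admissible (I : R -> Prop) (gamma dgamma : R -> vec) : Prop :=
  C1_arclength I gamma dgamma /\
  (forall t s, I t -> I s -> t < s < t + PI ->
     vangle (dgamma s) (dgamma t) <= s - t).

(* Main.v *)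
Require Import Defs.
From Stdlib Require Import Reals Lra.
From Coquelicot Require Import Coquelicot.
Open Scope R_scope.

Lemma mono (f df : R->R) a b : a <= b -> (forall x, a<=x<=b -> is_derive f x (df x)) ->
  (forall x, a<=x<=b -> 0<=df x) -> f a <= f b.
Proof.
  intros Hab Hd Hp.
  destruct (MVT_gen f a b df) as [c [Hc E]].
  - intros x Hx. apply Hd. rewrite Rmin_left in Hx by lra. rewrite Rmax_right in Hx by lra. lra.
  - intros x Hx. rewrite Rmin_left in Hx by lra. rewrite Rmax_right in Hx by lra.
    apply continuity_pt_filterlim. apply (ex_derive_continuous (K:=R_AbsRing) (V:=R_NormedModule)). eexists. apply Hd. lra.
  - rewrite Rmin_left in Hc by lra. rewrite Rmax_right in Hc by lra.
    assert (0 <= df c) by (apply Hp; lra). nra.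
Qed.

Lemma dot_deriv (g : R -> vec) (dg : R -> vec) (p w : vec) x :
  is_derive (fun y => fst (g y)) x (fst (dg x)) ->
  is_derive (fun y => snd (g y)) x (snd (dg x)) ->
  is_derive (fun r => vdot (vsub (g r) p) w) x (vdot (dg x) w).
Proof.
  intros H1 H2. unfold vdot, vsub; simpl.
  apply is_derive_Reals in H1. apply is_derive_Reals in H2. apply is_derive_Reals.
  apply (derivable_pt_lim_plus (fun r => (fst (g r) - fst p) * fst w) (fun r => (snd (g r) - snd p) * snd w)).
  - replace (fst (dg x) * fst w) with ((fst (dg x) - 0) * fst w) by ring.
    apply (derivable_pt_lim_scal_right (fun r => fst (g r) - fst p)).
    apply (derivable_pt_lim_minus (fun r => fst (g r)) (fun _ => fst p)). exact H1. apply derivable_pt_lim_const.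
  - replace (snd (dg x) * snd w) with ((snd (dg x) - 0) * snd w) by ring.
    apply (derivable_pt_lim_scal_right (fun r => snd (g r) - snd p)).
    apply (derivable_pt_lim_minus (fun r => snd (g r)) (fun _ => snd p)). exact H2. apply derivable_pt_lim_const.
Qed.

Lemma mono2 (f g df dg: R->R) a b: a<=b -> (forall x, a<=x<=b -> is_derive f x (df x)) ->
  (forall x, a<=x<=b -> is_derive g x (dg x)) -> (forall x, a<=x<=b -> dg x <= df x) ->
  g b - g a <= f b - f a.
Proof.
  intros Hab Hf Hg Hd.
  assert (K := mono (fun x => f x - g x) (fun x => df x - dg x) a b Hab).
  assert (f a - g a <= f b - g b); [|lra].
  apply K.
  - intros x Hx. apply is_derive_Reals. apply derivable_pt_lim_minus; apply is_derive_Reals; auto.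
  - intros x Hx. specialize (Hd x Hx). lra.
Qed.

Lemma pw (a b v1 v2 rho phi e : R): a^2+b^2=1 -> v1^2+v2^2=1 -> 0<=rho<=2*phi -> 0<phi<PI/2 ->
  cos rho <= v1*a+v2*b -> (e=1\/e=-1) ->
  sin(phi-rho) <= v1*(sin phi * a + e*cos phi*(-b)) + v2*(sin phi*b + e*cos phi*a).
Proof.
  intros Hu Hv Hr Hp Hc He.
  set (c := v1*a+v2*b). set (y := -v1*b+v2*a).
  assert (Hcy : c^2+y^2 = 1) by (unfold c, y; nra).
  assert (Hc1 : -1 <= c <= 1) by nra.
  assert (Ey : e*y >= - sqrt (1 - c²)).
  { assert (sqrt (1 - c²) = Rabs y).
    { rewrite <- sqrt_Rsqr_abs. f_equal. unfold Rsqr. nra. }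
    rewrite H. destruct He; subst e; unfold Rabs; destruct (Rcase_abs y); lra. }
  assert (cos PI = -1) by apply cos_PI.
  set (al := acos c).
  assert (Hal : 0 <= al <= PI) by apply acos_bound.
  assert (Hca : cos al = c) by (apply cos_acos; auto).
  assert (Hsa : sin al = sqrt (1 - c²)) by (apply sin_acos; auto).
  assert (Hle : al <= rho).
  { apply cos_decr_0; try lra. rewrite Hca. exact Hc. }
  assert (Hs : sin (phi - rho) <= sin (phi - al)).
  { apply sin_incr_1; lra. }
  rewrite (sin_minus phi al), Hca, Hsa in Hs.
  assert (0 <= sin phi) by (apply sin_ge_0; lra).
  assert (0 <= cos phi) by (apply cos_ge_0; lra).
  replace (v1 * (sin phi * a + e * cos phi * - b) + v2 * (sin phi * b + e * cos phi * a))
    with (sin phi * c + cos phi * (e*y)) by (unfold c, y; ring).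
  nra.
Qed.

Lemma norm1 (v : vec) : vnorm v = 1 -> fst v ^2 + snd v ^2 = 1.
Proof.
  unfold vnorm, vdot. intro H.
  assert (H0 : 0 <= fst v * fst v + snd v * snd v) by nra.
  assert (E := sqrt_sqrt _ H0). rewrite H in E. nra.
Qed.

Theorem lemma16 (I : R -> Prop) (gamma dgamma : R -> vec) (t s : R) :
  admissible I gamma dgamma ->
  I t -> I s -> t < s < t + PI ->
  gamma s <> gamma t /\
  vangle (dgamma t) (vsub (gamma s) (gamma t)) <= (s - t) / 2.
Proof.
  intros [[Hint [Hder [_ Hn]]] Hadm] It Is Hts.
  assert (IR : forall r, t <= r <= s -> I r) by (intros r Hr; apply (Hint t s); auto).
  destruct (dgamma t) as [a b] eqn:Eu.
  assert (Hu : a^2+b^2 = 1) by (pose proof (norm1 _ (Hn t It)); rewrite Eu in H; exact H).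
  assert (Hv : forall r, t <= r <= s -> fst (dgamma r)^2 + snd (dgamma r)^2 = 1)
    by (intros r Hr; apply norm1, Hn, IR, Hr).
  assert (Hcone : forall r, t <= r <= s -> cos (r - t) <= fst (dgamma r) * a + snd (dgamma r) * b).
  { intros r Hr. destruct (Req_dec r t) as [->|Hne].
    - rewrite Eu; simpl. replace (t - t) with 0 by ring. rewrite cos_0. nra.
    - assert (Ha := Hadm t r It (IR r Hr) ltac:(lra)).
      unfold vangle in Ha. rewrite (Hn r (IR r Hr)), Hn, Eu in Ha by exact It.
      unfold vdot in Ha; simpl in Ha.
      set (x := fst (dgamma r) * a + snd (dgamma r) * b) in *.
      replace (x / (1*1)) with x in Ha by field.
      assert (Hx : -1 <= x <= 1).
      { pose proof (Hv r Hr). assert (x^2 <= 1) by (unfold x; pose proof (pow2_ge_0 (fst (dgamma r) * b - snd (dgamma r) * a)); nra). nra. }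
      rewrite <- (cos_acos x Hx). pose proof (acos_bound x).
      apply cos_decr_1; lra. }
  set (D := vsub (gamma s) (gamma t)).
  assert (HD0 : forall w : vec, vdot (vsub (gamma t) (gamma t)) w = 0).
  { intros w. unfold vdot, vsub; simpl. ring. }
  assert (Hx : sin (s - t) <= vdot D (a, b)).
  { assert (K := mono2 (fun r => vdot (vsub (gamma r) (gamma t)) (a,b)) (fun r => sin (r - t))
       (fun r => vdot (dgamma r) (a,b)) (fun r => cos (r - t)) t s ltac:(lra)).
    simpl in K. rewrite HD0 in K. replace (t - t) with 0 in K by ring. rewrite sin_0 in K.
    rewrite !Rminus_0_r in K. unfold D. apply K.
    - intros r Hr. apply dot_deriv; apply Hder, IR, Hr.
    - intros r Hr. auto_derive; auto. rewrite Rmult_1_l; reflexivity.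
    - intros r0 Hr. unfold vdot; simpl. apply (Hcone r0 Hr). }
  set (phi := (s - t) / 2).
  assert (Hphi : 0 < phi < PI/2) by (unfold phi; lra).
  assert (Hw : forall e, e = 1 \/ e = -1 ->
     0 <= vdot D (sin phi * a + e*cos phi*(-b), sin phi*b + e*cos phi*a)).
  { intros e He.
    assert (K := mono2 (fun r => vdot (vsub (gamma r) (gamma t)) (sin phi * a + e*cos phi*(-b), sin phi*b + e*cos phi*a))
       (fun r => cos (phi - (r - t)))
       (fun r => vdot (dgamma r) (sin phi * a + e*cos phi*(-b), sin phi*b + e*cos phi*a))
       (fun r => sin (phi - (r - t))) t s ltac:(lra)).
    simpl in K. rewrite HD0 in K.
    replace (phi - (s - t)) with (- phi) in K by (unfold phi; field).
    replace (phi - (t - t)) with phi in K by ring. rewrite cos_neg in K.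
    rewrite Rminus_0_r, Rminus_diag in K. unfold D. apply K.
    - intros r Hr. apply dot_deriv; apply Hder, IR, Hr.
    - intros r Hr. auto_derive; auto. replace (phi + - (r + - t)) with (phi - (r - t)) by ring. ring.
    - intros r0 Hr0. unfold vdot; simpl. apply pw; auto. unfold phi; lra.
  }
  assert (HsL : 0 < sin (s - t)) by (apply sin_gt_0; lra).
  unfold D in *. clear D. destruct (vsub (gamma s) (gamma t)) as [D1 D2] eqn:ED.
  unfold vdot in Hx, Hw; simpl in Hx, Hw.
  split.
  { intro E. unfold vsub in ED. rewrite E in ED. injection ED as <- <-. lra. }
  unfold vangle. replace (vnorm (a,b)) with 1 by (rewrite <- Eu; symmetry; apply Hn, It).
  unfold vnorm, vdot; simpl.
  set (x := a*D1 + b*D2). set (y := - D1*b + D2*a).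
  assert (HN : D1*D1+D2*D2 = x^2+y^2) by (unfold x, y; nra).
  rewrite HN, Rmult_1_l.
  assert (Hp := Hw 1 (or_introl eq_refl)). assert (Hm := Hw (-1) (or_intror eq_refl)).
  assert (Hxp : 0 < x) by (unfold x; lra).
  assert (sp : 0 < sin phi) by (apply sin_gt_0; lra).
  assert (cp : 0 < cos phi) by (apply cos_gt_0; lra).
  assert (A1 : 0 <= sin phi * x + cos phi * y) by (unfold x, y; nra).
  assert (A2 : 0 <= sin phi * x - cos phi * y) by (unfold x, y; nra).
  assert (Hsc := sin2_cos2 phi). unfold Rsqr in Hsc.
  set (N := sqrt (x^2+y^2)).
  assert (HN0 : 0 < N) by (apply sqrt_lt_R0; nra).
  assert (HN2 : N*N = x^2+y^2) by (apply sqrt_sqrt; nra).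
  assert (Hq1 : x / N <= 1).
  { assert (HxN : x <= N). { destruct (Rle_lt_dec x N) as [Hc0|Hc]; [exact Hc0|]. assert (N*N < x*x) by (apply Rmult_le_0_lt_compat; lra). nra. } unfold Rdiv. apply Rmult_le_reg_r with N; auto. rewrite Rmult_assoc, Rinv_l, Rmult_1_r by lra. lra. }
  assert (Hq2 : cos phi <= x / N).
  { apply Rmult_le_reg_r with N; auto. unfold Rdiv. rewrite Rmult_assoc, Rinv_l, Rmult_1_r by lra.
    assert ((cos phi * N)^2 <= x^2).
    { replace ((cos phi * N)^2) with (cos phi ^2 * (x^2+y^2)) by (rewrite <- HN2; ring).
      assert (cos phi ^2 * y^2 <= sin phi^2 * x^2) by nra. nra. }
    nra. }
  assert (Hq : -1 <= x / N <= 1) by (split; lra).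
  pose proof (acos_bound (x/N)).
  apply cos_decr_0; try lra.
  rewrite cos_acos by exact Hq. exact Hq2.
Qed.
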